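(* Let $k$ be a positive integer and let $\mathcal{A}$ be a family of $3$-element subsets of $[k]=\{1,\dots,k\}$ with the following property: whenever $[k]=R_1\cup R_2\cup R_3$ is a partition of $[k]$ into three non-empty sets, there exists $A\in\mathcal{A}$ with $A\cap R_i\neq\emptyset$ for $i=1,2,3$. Then $|\mathcal{A}|\geq \frac{k(k-2)}{3}$. *)

(* Defs.v *)
From mathcomp Require Import all_boot all_order all_algebra.
Set Implicit Arguments. Unset Strict Implicit. Unset Printing Implicit Defensive.

Definition partition3 (k : nat) (R1 R2 R3 : {set 'I_k}) : Prop :=
  [/\ R1 != set0, R2 != set0 & R3 != set0] /\
  [/\ [disjoint R1 & R2], [disjoint R1 & R3], [disjoint R2 & R3]
    & R1 :|: R2 :|: R3 = setT].

(* Main.v *)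
Require Import Defs.
From mathcomp Require Import all_boot all_order all_algebra.
From mathcomp Require Import zify lra.

Lemma cut_exists (T : finType) (n : nat) (E : seq (T * T)) (V : {set T}) :
  size E = n -> (size E + 2 <= #|V|)%N ->
  exists S : {set T}, [/\ S \subset V, S != set0, S != V &
    forall p, p \in E -> p.1 \in V -> p.2 \in V -> (p.1 \in S) = (p.2 \in S)].
Proof.
elim: n E V => [|n IH] [|[u w] E] V //=.
- move=> _ hV.
  have : (0 < #|V|)%N by apply: leq_trans hV.
  case/card_gt0P=> v vV.
  exists [set v]; split => //.
  + by rewrite sub1set.
  + by apply/set0Pn; exists v; rewrite inE.
  + apply/eqP=> hv; move: hV; rewrite -hv cards1 //.
- move=> [hs] hV.
  have [good|bad] := boolP [&& u \in V, w \in V & u != w]; last first.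
    have [S [S1 S2 S3 S4]] := IH E V hs (ltnW hV).
    exists S; split => // p; rewrite inE => /orP[/eqP -> /= uV wV|pE]; last exact: S4.
    move: bad; rewrite uV wV /= negbK => /eqP -> //.
  case/and3P: good => uV wV uw.
  pose g := fun x => if x == w then u else x.
  pose E' := map (fun p => (g p.1, g p.2)) E.
  have uV' : u \in V :\ w by rewrite !inE uw uV.
  have hV' : (size E' + 2 <= #|V :\ w|)%N.
    have hc := cardsD1 w V; rewrite wV in hc; rewrite size_map; move: hV; rewrite hc /=; lia.
  have [S' [S1 S2 S3 S4]] := IH E' (V :\ w) (etrans (size_map _ _) hs) hV'.
  have wS' : w \notin S'.
    by apply/negP=> /(subsetP S1); rewrite !inE eqxx.
  pose S := if u \in S' then w |: S' else S'.
  have key : forall x, x \in V -> (x \in S) = (g x \in S').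
    move=> x xV; rewrite /S /g.
    case: (x =P w) => [->|/eqP xw].
      by case: (u \in S') => //; rewrite ?inE ?eqxx // (negbTE wS').
    by case: (u \in S'); rewrite ?inE ?(negbTE xw).
  have gV : forall x, x \in V -> g x \in V :\ w.
    move=> x xV; rewrite /g; case: (x =P w) => // /eqP xw.
    by rewrite !inE xw.
  exists S; split.
  + rewrite /S; case: (u \in S').
      rewrite subUset sub1set wV /=; apply: subset_trans S1 _; exact: subD1set.
    apply: subset_trans S1 _; exact: subD1set.
  + apply/set0Pn; case/set0Pn: S2 => v vS; exists v.
    by rewrite /S; case: (u \in S'); rewrite ?inE ?vS ?orbT.
  + apply/negP=> /eqP hSV.
    have : ~~ (V :\ w \subset S').
      apply/negP=> sub; apply/negP: S3; rewrite negbK eqEsubset S1 //.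
    case/subsetPn=> v vV vS.
    move: (vV); rewrite !inE => /andP[vw vV0].
    have := key v vV0; rewrite /g (negbTE vw) hSV vV0 => hh.
    by rewrite -hh in vS.
  + move=> p; rewrite inE => /orP[/eqP -> /= _ _|pE p1 p2].
      by rewrite key // key // /g eqxx (negbTE uw).
    rewrite key // key //; apply: (S4 (g p.1, g p.2)).
    - by apply/mapP; exists p.
    - exact: gV.
    - exact: gV.
Qed.
Lemma dc (k : nat) (F : {set {set 'I_k}}) :
  (\sum_(x : 'I_k) #|[set A in F | x \in A]| = \sum_(A in F) #|A|)%N.
Proof.
transitivity (\sum_(x : 'I_k) \sum_(A in F) ((x \in A) : nat))%N.
  apply: eq_bigr => x _; rewrite -sum1_card.
  rewrite big_mkcond [RHS]big_mkcond; apply: eq_bigr => A _.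
  by rewrite !inE; case: (A \in F); case: (x \in A).
rewrite exchange_big; apply: eq_bigr => A _.
by rewrite -sum1_card [RHS]big_mkcond.
Qed.

Lemma two_elems (T : finType) (D : {set T}) (x : T) : #|D| = 2 ->
  [/\ nth x (enum D) 0 \in D, nth x (enum D) 1 \in D &
     forall a, a \in D -> a = nth x (enum D) 0 \/ a = nth x (enum D) 1].
Proof.
rewrite cardE => hs; have hm := mem_enum D.
move: hs hm; case: (enum D) => [|p1 [|p2 [|? ?]]] //= _ hm.
rewrite -!hm !inE !eqxx orbT; split => // a; rewrite -hm !inE.
by case/orP=> /eqP ->; [left|right].
Qed.

Import GRing.Theory Num.Theory.
Local Open Scope ring_scope.

Theorem lemma1 (k : nat) (hk : (0 < k)%N) (F : {set {set 'I_k}})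
  (h3 : forall A, A \in F -> #|A| = 3%N)
  (hcov : forall R1 R2 R3 : {set 'I_k}, partition3 R1 R2 R3 ->
     exists2 A, A \in F &
       [/\ A :&: R1 != set0, A :&: R2 != set0 & A :&: R3 != set0]) :
  (k%:R * (k%:R - 2)) / 3 <= (#|F|%:R : rat).
Proof.
have [k2|k1] := leqP 2 k; last first.
  have -> : (k%:R : rat) = 1 by have -> : k = 1%N by lia.
  have h0 : (0 : rat) <= #|F|%:R by [].
  lra.
have hx : forall x : 'I_k, (k - 2 <= #|[set A in F | x \in A]|)%N.
  move=> x; rewrite leqNgt; apply/negP => hlt.
  pose E := [seq (nth x (enum (A :\ x)) 0, nth x (enum (A :\ x)) 1)
            | A <- enum [set A in F | x \in A]].
  pose V := [set~ x].
  have hV : (size E + 2 <= #|V|)%N.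
    have hsz : size E = #|[set A in F | x \in A]| by rewrite size_map -cardE.
    rewrite hsz cardsC1 card_ord -subn1; move: hlt; lia.
  have [S [S1 S2 S3 S4]] := cut_exists _ _ _ _ (erefl (size E)) hV.
  have xS : x \notin S by apply/negP => /(subsetP S1); rewrite !inE eqxx.
  have hp : partition3 [set x] S (V :\: S).
    split; first split.
    - by apply/set0Pn; exists x; rewrite inE.
    - done.
    - have nsub : ~~ (V \subset S).
        by apply/negP => sub; move/negP: S3; apply; rewrite eqEsubset S1 sub.
      apply/set0Pn; case/subsetPn: nsub => v vV vS.
      by exists v; rewrite !inE vS; rewrite !inE in vV.
    split; rewrite -?setI_eq0; try (apply/eqP/setP => y; rewrite !inE;
      case: (y =P x) => [->|_]; rewrite ?(negbTE xS) //=;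
      case: (y \in S); rewrite ?andbF ?andbT //).
    - apply/setP => y; rewrite !inE.
      by case: (y =P x) => //= _; case: (y \in S).
  have [A AF [h1 h2 h3']] := hcov _ _ _ hp.
  have xA : x \in A.
    by case/set0Pn: h1 => y; rewrite !inE => /andP[? /eqP <-].
  case/set0Pn: h2 => a; rewrite inE => /andP[aA aS].
  case/set0Pn: h3' => b; rewrite !inE => /and3P[bA bS bx].
  have c2 : #|A :\ x| = 2%N by have := cardsD1 x A; rewrite xA (h3 _ AF) add1n => -[].
  have [q1 q2 hq] := @two_elems _ _ x c2.
  set p1 := nth x (enum (A :\ x)) 0 in q1 q2 hq.
  set p2 := nth x (enum (A :\ x)) 1 in q1 q2 hq.
  have pE : (p1, p2) \in E.
    by apply/mapP; exists A => //; rewrite mem_enum !inE AF xA.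
  have inV : forall y, y \in A :\ x -> y \in V.
    by move=> y; rewrite !inE => /andP[].
  have := S4 _ pE (inV _ q1) (inV _ q2); rewrite /=.
  have aAx : a \in A :\ x.
    rewrite !inE aA andbT; apply/negP => /eqP ax; by move: xS; rewrite -ax aS.
  have bAx : b \in A :\ x by rewrite !inE bA bx.
  move=> heq; move: aS bS; case: (hq _ aAx) => ->; case: (hq _ bAx) => ->;
    by rewrite ?heq => ->.
have hsum : (k * (k - 2) <= 3 * #|F|)%N.
  have -> : (3 * #|F| = \sum_(A in F) #|A|)%N.
    by rewrite (eq_bigr (fun _ => 3%N)) ?sum_nat_const 1?mulnC // => A /h3.
  rewrite -dc.
  have h : (\sum_(x : 'I_k) (k - 2) <= \sum_(x : 'I_k) #|[set A in F | x \in A]|)%N.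
    by apply: leq_sum => x _; exact: hx.
  by move: h; rewrite sum_nat_const card_ord.
rewrite ler_pdivrMr // -natrB // -natrM.
have -> : (#|F|%:R * 3 : rat) = (#|F| * 3)%N%:R by rewrite natrM.
by rewrite ler_nat [(#|F| * 3)%N]mulnC.
Qed.
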